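(* Let the system $x^+=f(x,u)$, $\zeta=g(x,u)$ and its associated system $z^+=\psi_x(z,v)$, $\eta=\psi_u(z,v)$ be as in the context. Then the associated system is flat (in the sense defined in the context) if and only if the original system is flat. More precisely, suppose the original system is flat with flat output $$y=\varphi(\zeta_{[-Q_1,-1]},x,u,u_{[1,Q_2]})$$ and parameterization $x=F_x(y_{[-R_1,R_2-1]})$, $u=F_u(y_{[-R_1,R_2]})$. Then the associated system is flat with flat output $$\hat y=\varphi\big(v_{[Q_1,1]},\,\psi_x(z,v),\,\psi_u(z,v),\,\eta_{[-1,-Q_2]}\big)=\hat\varphi(\eta_{[-Q_2,-1]},z,v,v_{[1,Q_1]}),$$ obtained from $\varphi$ by replacing each $\zeta_{[-j]}$ by $v_{[j]}$ ($1\le j\le Q_1$), $x$ by $\psi_x(z,v)$, $u$ by $\psi_u(z,v)$, and each $u_{[j]}$ by $\eta_{[-j]}$ ($1\le j\le Q_2$), componentwise. Its trajectories are related to those of $y$, for any fixed $k$, by $\hat y(k+l)=y(k-l)$, $l\in\mathbb{Z}$ (this imposes no constraint on $\hat y$). The corresponding parameterization of the associated system is $$z=F_x(\hat y_{[R_1-1,-R_2]})=F_z(\hat y_{[-R_2,R_1-1]}),\qquad v=g\big(F_x(\hat y_{[R_1,-R_2+1]}),F_u(\hat y_{[R_1,-R_2]})\big)=F_v(\hat y_{[-R_2,R_1]}),$$ and $\eta=F_u(\hat y_{[R_1,-R_2]})$; here $F_x(\hat y_{[R_1-1,-R_2]})$ means $F_x$ with its argument $y_{[j]}$ replaced by $\hat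 y_{[-j-1]}$ for $j\in[-R_1,R_2-1]$, and $F_x(\hat y_{[R_1,-R_2+1]})$, $F_u(\hat y_{[R_1,-R_2]})$ mean $F_x$, $F_u$ with $y_{[j]}$ replaced by $\hat y_{[-j]}$ (componentwise for multi-indices). Conversely, if the associated system is flat with flat output $\hat y=\hat\varphi(\eta_{[-Q_2,-1]},z,v,v_{[1,Q_1]})$, then the original system is flat with flat output $$y=\hat\varphi\big(u_{[Q_2,1]},f(x,u),g(x,u),\zeta_{[-1,-Q_1]}\big),$$ obtained by replacing each $\eta_{[-j]}$ by $u_{[j]}$, $z$ by $f(x,u)$, $v$ by $g(x,u)$, and each $v_{[j]}$ by $\zeta_{[-j]}$.
   Context: Consider a nonlinear time-invariant discrete-time system $x^{i,+}=f^i(x,u)$, $i=1,\dots,n$, with $x\in\mathbb{R}^n$, $u\in\mathbb{R}^m$, smooth $f$, $\operatorname{rank}(\partial_u f)=m$, and the submersivity condition $\operatorname{rank}(\partial_{(x,u)}f)=n$. Choose $m$ smooth functions $g(x,u)$ such that $(x,u)\mapsto(f(x,u),g(x,u))$ is a local diffeomorphism, with local inverse $x=\psi_x(x^+,\zeta)$, $u=\psi_u(x^+,\zeta)$. The associated system is $z^+=\psi_x(z,v)$, $\eta=\psi_u(z,v)$ with state $z\in\mathbb{R}^n$, input $v\in\mathbb{R}^m$, output $\eta\in\mathbb{R}^m$; its trajectories correspond one-to-one to those of $x^+=f(x,u)$, $\zeta=g(x,u)$ via $x(k+l)=z(k-l+1)$, $u(k+l)=\eta(k-l)$, $\zeta(k+l)=v(k-l)$.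 Notation: for a variable $w$, $w_{[\alpha]}$ denotes its $\alpha$-th forward shift ($w_{[\alpha]}(k)=w(k+\alpha)$) and $w_{[-\alpha]}$ its $\alpha$-th backward shift, $\alpha\ge0$; $w^+=w_{[1]}$. For a multi-component $y=(y^1,\dots,y^m)$ and multi-indices $S_1=(s_{1,1},\dots,s_{1,m})$, $S_2=(s_{2,1},\dots,s_{2,m})$, $y_{[-S_1,S_2]}$ denotes all $y^j_{[i]}$ with $-s_{1,j}\le i\le s_{2,j}$; similarly $\zeta_{[-Q_1,-1]}$, $u_{[1,Q_2]}$ etc.; $y_{[R_2-1]}$ means the shifts $y^j_{[r_{2,j}-1]}$, etc. Flatness (Definition): the system $x^+=f(x,u)$ is flat around an equilibrium $(x_0,u_0)$ if there exist an $m$-tuple of smooth functions $y^j=\varphi^j(\zeta_{[-Q_1,-1]},x,u,u_{[1,Q_2]})$, $j=1,\dots,m$ (the flat output; here $\zeta=g(x,u)$), and smooth maps $x=F_x(y_{[-R_1,R_2-1]})$, $u=F_u(y_{[-R_1,R_2]})$ (the parameterization) such that locally the $n+m$ coordinate functions $x,u$ are expressed by the flat output and its backward and forward shifts; equivalently, these maps establish a one-to-one correspondence between trajectories $(x(k),u(k))$ of the system and arbitrary sequences $y(k)\in\mathbb{R}^m$ (no difference equation imposed on $y$), where $x(k),u(k)$ may depend on finitely many past and future values of $y$ and vice versa. For the associated system, the same definition applies with $(z,v,\eta)$ in place of $(x,u,\zeta)$, $\psi_x$ in place of $f$, and $\psi_u$ in place of $g$. *)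

(* Defs.v *)
From HB Require Import structures.
From mathcomp Require Import all_boot all_order all_algebra.
From mathcomp Require Import all_classical all_reals all_analysis.
Set Implicit Arguments. Unset Strict Implicit. Unset Printing Implicit Defensive.
Import Order.TTheory GRing.Theory Num.Theory.
Local Open Scope classical_set_scope.
Local Open Scope ring_scope.

Fixpoint Ck {R : realType} {V W : normedModType R} (A : set V) (k : nat)
    (f : V -> W) {struct k} : Prop :=
  match k with
  | 0 => forall x, A x -> {for x, continuous f}
  | k'.+1 => (forall x, A x -> differentiable f x) /\
             (forall v : V, Ck A k' (fun x => 'D_v f x))
  end.

Definition smooth_on {R : realType} {V W : normedModType R} (A : set V)
    (f : V -> W) : Prop := forall k, Ck A k f.

Definition smooth_near {R : realType} {V W : normedModType R} (p : V)
    (f : V -> W) : Prop := exists A : set V, [/\ open A, A p & smooth_on A f].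

Definition win {R : realType} {p : nat} (s : int -> 'rV[R]_p) (a : int) (L : nat)
  : 'M[R]_(L, p) := \matrix_(i < L, j < p) s (a + (i : nat)%:Z) 0 j.

Definition cwin {R : realType} {p : nat} (L : nat) (c : 'rV[R]_p) : 'M[R]_(L, p) :=
  win (fun _ => c) 0 L.

Definition rev_rows {R : realType} {L p : nat} (A : 'M[R]_(L, p)) : 'M[R]_(L, p) :=
  \matrix_(i < L, j < p) A (rev_ord i) j.

(* Flat output  y(k) = phi(zeta_[-Q1,-1], x, u, u_[1,Q2])  encoded as  *)
(*   phi (win zeta (k-Q1) Q1, x k, u k, win u (k+1) Q2);               *)
(* parameterization                                                    *)
(*   x(k) = Fx (y_[-R1, R2-1]) = Fx (win y (k-R1) (R1+R2)),            *)
(*   u(k) = Fu (y_[-R1, R2])   = Fu (win y (k-R1) (R1+R2).+1).         *)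
Section Flat.
Context {R : realType} {n m : nat}.
Local Notation X := ('rV[R]_n : normedModType R).
Local Notation U := ('rV[R]_m : normedModType R).

Definition flat_param (F : X * U -> X) (G : X * U -> U) (x0 : X) (u0 : U)
  (Q1 Q2 : nat) (phi : 'M[R]_(Q1, m) * X * U * 'M[R]_(Q2, m) -> U)
  (R1 R2 : nat) (Fx : 'M[R]_(R1 + R2, m) -> X) (Fu : 'M[R]_((R1 + R2).+1, m) -> U)
  : Prop :=
  let phi0 := (cwin Q1 (G (x0, u0)), x0, u0, cwin Q2 u0) in
  let y0 := phi phi0 in
  [/\ smooth_near phi0 phi,
      smooth_near (cwin (R1 + R2) y0) Fx,
      smooth_near (cwin (R1 + R2).+1 y0) Fu &
  exists (N : set (X * U : normedModType R)) (M : set U),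
  [/\ open N /\ N (x0, u0), open M /\ M y0,
    (forall (x : int -> X) (u : int -> U),
      (forall k, x (k + 1) = F (x k, u k)) ->
      (forall k, N (x k, u k)) ->
      let y := fun k => phi (win (fun l => G (x l, u l)) (k - Q1%:Z) Q1,
                             x k, u k, win u (k + 1) Q2) in
      forall k, x k = Fx (win y (k - R1%:Z) (R1 + R2)) /\
                u k = Fu (win y (k - R1%:Z) (R1 + R2).+1)) &
    (forall y : int -> U, (forall k, M (y k)) ->
      let x := fun k => Fx (win y (k - R1%:Z) (R1 + R2)) in
      let u := fun k => Fu (win y (k - R1%:Z) (R1 + R2).+1) in
      [/\ forall k, x (k + 1) = F (x k, u k),
          forall k, N (x k, u k) &
          forall k, y k = phi (win (fun l => G (x l, u l)) (k - Q1%:Z) Q1,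
                               x k, u k, win u (k + 1) Q2)])]].

Definition flat_output (F : X * U -> X) (G : X * U -> U) (x0 : X) (u0 : U)
  (Q1 Q2 : nat) (phi : 'M[R]_(Q1, m) * X * U * 'M[R]_(Q2, m) -> U) : Prop :=
  exists (R1 R2 : nat) (Fx : 'M[R]_(R1 + R2, m) -> X)
         (Fu : 'M[R]_((R1 + R2).+1, m) -> U),
    flat_param F G x0 u0 phi Fx Fu.

Definition flat (F : X * U -> X) (G : X * U -> U) (x0 : X) (u0 : U) : Prop :=
  exists (Q1 Q2 : nat) (phi : 'M[R]_(Q1, m) * X * U * 'M[R]_(Q2, m) -> U),
    flat_output F G x0 u0 phi.

(* hat phi (eta_[-Q2,-1], z, v, v_[1,Q1])
     := phi (v_[Q1,1], psi_x(z,v), psi_u(z,v), eta_[-1,-Q2])           *)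
Definition hat_phi (psix : X * U -> X) (psiu : X * U -> U) (Q1 Q2 : nat)
  (phi : 'M[R]_(Q1, m) * X * U * 'M[R]_(Q2, m) -> U)
  : 'M[R]_(Q2, m) * X * U * 'M[R]_(Q1, m) -> U :=
  fun w => match w with (E, z, v, V) =>
    phi (rev_rows V, psix (z, v), psiu (z, v), rev_rows E) end.

(* F_z (yh_[-R2, R1-1]) := Fx with y_[j] replaced by yh_[-j-1] *)
Definition Fz_of (R1 R2 : nat) (Fx : 'M[R]_(R1 + R2, m) -> X)
  : 'M[R]_(R2 + R1, m) -> X :=
  fun W => Fx (\matrix_(i < R1 + R2, j < m)
                  W (rev_ord (cast_ord (addnC R1 R2) i)) j).

(* F_v (yh_[-R2, R1]) := g (Fx(y_[j] := yh_[-j]), Fu(y_[j] := yh_[-j])) *)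
Definition Fv_of (G : X * U -> U) (R1 R2 : nat) (Fx : 'M[R]_(R1 + R2, m) -> X)
  (Fu : 'M[R]_((R1 + R2).+1, m) -> U) : 'M[R]_((R2 + R1).+1, m) -> U :=
  fun W =>
    G (Fx (\matrix_(i < R1 + R2, j < m)
             W (cast_ord (congr1 S (addnC R1 R2))
                         (rev_ord (widen_ord (leqnSn _) i))) j),
       Fu (\matrix_(i < (R1 + R2).+1, j < m)
             W (cast_ord (congr1 S (addnC R1 R2)) (rev_ord i)) j)).

(* phi (zeta_[-Q1,-1], x, u, u_[1,Q2])
     := hat phi (u_[Q2,1], f(x,u), g(x,u), zeta_[-1,-Q1])              *)
Definition back_phi (F : X * U -> X) (G : X * U -> U) (Q2 Q1 : nat)
  (hphi : 'M[R]_(Q2, m) * X * U * 'M[R]_(Q1, m) -> U)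
  : 'M[R]_(Q1, m) * X * U * 'M[R]_(Q2, m) -> U :=
  fun w => match w with (Z, x, u, Uw) =>
    hphi (rev_rows Uw, F (x, u), G (x, u), rev_rows Z) end.

End Flat.

(* Main.v *)
Require Import Defs.
From HB Require Import structures.
From mathcomp Require Import all_boot all_order all_algebra.
From mathcomp Require Import all_classical all_reals all_analysis.
From mathcomp Require Import zify.
Import Order.TTheory GRing.Theory Num.Theory.
Local Open Scope classical_set_scope.
Local Open Scope ring_scope.
Set Implicit Arguments.

Definition scalefun {R : realType} {W : normedModType R} (a : R^o) (w : W) : W := a *: w.
Lemma scalefun_is_bilinear (R : realType) (W : normedModType R) :
  bilinear_for (GRing.Scale.Law.clone _ _ *:%R _) (GRing.Scale.Law.clone _ _ *:%R _)
   (@scalefun R W).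
Proof.
split=> [u'|u] a x y /=; rewrite /scalefun.
- by rewrite scalerDl scalerA.
- by rewrite scalerDr !scalerA mulrC.
Qed.
HB.instance Definition _ (R : realType) (W : normedModType R) :=
  bilinear_isBilinear.Build R R^o W W _ _ (@scalefun R W) (@scalefun_is_bilinear R W).

Section CkLib.
Context {R : realType}.

Lemma near_eq_diff0 (V W : normedModType R) (h : V -> W) x :
  (\forall y \near x, h y = 0) -> differentiable h x.
Proof.
move=> h0.
have hx : h x = 0 by apply: (nbhs_singleton h0).
have lin0 : linear (fun _ : V => (0:W)) by move=> a u v; rewrite scaler0 addr0.
pose zM := GRing.isLinear.Build _ _ _ _ _ lin0.
pose z : {linear V -> W} := HB.pack (fun _ : V => (0:W)) zM.
have hs : \forall y \near (0:V), h (y + x) = 0.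
  have c : (fun y => y + x) @ (0:V) --> 0 + x.
    by apply: cvgD; [exact: cvg_id| exact: cvg_cst].
  rewrite add0r in c; exact: (c _ h0).
have d0 : 'd h x = z :> (V -> W).
  apply: diff_unique; first by move=> ?; apply: cvg_cst.
  apply/eqaddoP => _/posnumP[e].
  apply: filterS hs => y hy /=.
  suff -> : (h \o +%R^~ x - (cst (h x) + (fun=> 0))) y = 0 by rewrite normr0 mulr_ge0.
  by rewrite !fctE /= hy hx addr0 subrr.
apply/diff_locallyP; rewrite d0; split; first by move=> ?; apply: cvg_cst.
apply/eqaddoP => _/posnumP[e].
apply: filterS hs => y hy /=.
suff -> : (h \o +%R^~ x - (cst (h x) + (fun=> 0))) y = 0 by rewrite normr0 mulr_ge0.
by rewrite !fctE /= hy hx addr0 subrr.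
Qed.

Lemma near_eq_diff (V W : normedModType R) (f g : V -> W) x :
  (\forall y \near x, f y = g y) -> differentiable f x -> differentiable g x.
Proof.
move=> fg df.
have -> : g = f + (g - f) by apply/funext => y; rewrite !fctE addrC subrK.
apply: differentiableD => //; apply: near_eq_diff0.
by apply: filterS fg => y fy; rewrite !fctE fy subrr.
Qed.

Lemma near_eq_cont (T : topologicalType) (W : normedModType R) (f g : T -> W) x :
  (\forall y \near x, f y = g y) -> {for x, continuous f} -> {for x, continuous g}.
Proof.
move=> fg cf; have e : f x = g x := nbhs_singleton fg.
suff : g @ x --> g x by []; rewrite -e.
by apply: cvg_trans cf; apply: near_eq_cvg; apply: filterS fg.
Qed.

Lemma open_nbhs_of (T : topologicalType) (A : set T) x : open A -> A x -> nbhs x A.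
Proof. by rewrite openE => oA Ax; apply: oA. Qed.

Lemma Ck_ext (V W : normedModType R) (A : set V) k (f g : V -> W) : open A ->
  (forall x, A x -> f x = g x) -> Ck A k f -> Ck A k g.
Proof.
move=> oA; elim: k f g => [|k IH] f g fg /=.
- move=> cf x Ax; apply: near_eq_cont (cf x Ax).
  near=> y; apply: fg; near: y; exact: open_nbhs_of.
- move=> [df dD]; split.
    move=> x Ax; apply: near_eq_diff (df x Ax).
    near=> y; apply: fg; near: y; exact: open_nbhs_of.
  move=> v; apply: IH (dD v) => x Ax; apply: near_eq_derive.
  near=> y; apply: fg; near: y; exact: open_nbhs_of.
Unshelve. all: by end_near. Qed.
Lemma Ck_mono (V W : normedModType R) (A : set V) k (f : V -> W) :
  Ck A k.+1 f -> Ck A k f.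
Proof.
elim: k f => [|k IH] f /=.
- by move=> [df _] x Ax; apply: differentiable_continuous; apply: df.
- by move=> [df dD]; split => // v; apply: IH; apply: dD.
Qed.

Lemma Ck_monoS (V W : normedModType R) (A : set V) k j (f : V -> W) :
  (j <= k)%N -> Ck A k f -> Ck A j f.
Proof.
elim: k j => [|k IH] j; first by rewrite leqn0 => /eqP ->.
rewrite leq_eqVlt => /orP[/eqP -> //|]; rewrite ltnS => jk Cf.
by apply: IH jk _; apply: Ck_mono.
Qed.

Lemma Ck_sub (V W : normedModType R) (A B : set V) k (f : V -> W) :
  B `<=` A -> Ck A k f -> Ck B k f.
Proof.
move=> BA; elim: k f => [|k IH] f /=.
- by move=> cf x Bx; apply: cf; apply: BA.
- by move=> [df dD]; split => [x Bx|v]; [apply: df; apply: BA|apply: IH].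
Qed.

Lemma Ck_cst (V W : normedModType R) (A : set V) k (c : W) :
  Ck A k (fun _ : V => c).
Proof.
elim: k c => [|k IH] c /=.
- by move=> x _; apply: cvg_cst.
- split=> [x _|v]; first exact: differentiable_cst.
  have -> : (fun x => 'D_v (fun _ : V => c) x) = (fun _ => 0).
    by apply/funext => y; exact: derive_cst.
  exact: IH.
Qed.

Lemma Ck_add (V W : normedModType R) (A : set V) k (f g : V -> W) : open A ->
  Ck A k f -> Ck A k g -> Ck A k (fun x => f x + g x).
Proof.
move=> oA; elim: k f g => [|k IH] f g /=.
- by move=> cf cg x Ax; apply: continuousD; [apply: cf|apply: cg].
- move=> [df dDf] [dg dDg]; split.
    by move=> x Ax; apply: differentiableD; [apply: df|apply: dg].
  move=> v; apply: (@Ck_ext _ _ _ _ (fun x => 'D_v f x + 'D_v g x)) => //.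
    move=> x Ax; rewrite -deriveD //; apply/diff_derivable; [exact: df|exact: dg].
  by apply: IH; [apply: dDf|apply: dDg].
Qed.


Lemma Ck_scale (V W : normedModType R) (A : set V) k (a : V -> R^o) (F : V -> W) :
  open A -> Ck A k a -> Ck A k F -> Ck A k (fun x => a x *: F x).
Proof.
move=> oA; elim: k a F => [|k IH] a F /=.
- by move=> ca cF x Ax; apply: continuousZ; [apply: ca|apply: cF].
- move=> [da dDa] [dF dDF].
  have key : forall x, A x -> differentiable (fun x => a x *: F x) x /\
     forall v, 'D_v (fun x => a x *: F x) x = 'D_v a x *: F x + a x *: 'D_v F x.
    move=> x Ax.
    have e : (fun x => a x *: F x) =
       (fun p : R^o * W => scalefun p.1 p.2) \o (fun x => (a x, F x)) by [].
    have cs : continuous (fun p : R^o * W => scalefun p.1 p.2).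
      rewrite /scalefun; exact: scale_continuous.
    have dp := differentiable_pair (da x Ax) (dF x Ax).
    have db := differentiable_bilin (a x, F x) cs.
    have dc : differentiable (fun x => a x *: F x) x.
      by rewrite e; apply: differentiable_comp.
    split=> // v; rewrite (deriveE v dc) e (diff_comp dp db) diff_bilin //= (diff_pair (da x Ax) (dF x Ax)) /=.
    by rewrite /scalefun (deriveE v (da x Ax)) (deriveE v (dF x Ax)) addrC.
  split; first by move=> x Ax; case: (key x Ax).
  move=> v; apply: (@Ck_ext _ _ _ _ (fun x => 'D_v a x *: F x + a x *: 'D_v F x)) => //.
    by move=> x Ax; case: (key x Ax) => _ ->.
  apply: Ck_add => //; apply: IH => //.
  + exact: Ck_mono (conj dF dDF).
  + exact: Ck_mono (conj da dDa).
Qed.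

Lemma Ck_sum (V W : normedModType R) (A : set V) k (I : finType) (h : I -> V -> W) :
  open A -> (forall i, Ck A k (h i)) -> Ck A k (fun x => \sum_i h i x).
Proof.
move=> oA Ch.
suff : forall s : seq I, Ck A k (fun x => \sum_(i <- s) h i x) by apply.
elim=> [|i s IHs].
  have -> : (fun x => \sum_(i <- [::]) h i x) = (fun _ => 0).
    by apply/funext => x; rewrite big_nil.
  exact: Ck_cst.
have -> : (fun x => \sum_(j <- i :: s) h j x) = (fun x => h i x + \sum_(j <- s) h j x).
  by apply/funext => x; rewrite big_cons.
exact: Ck_add.
Qed.

Lemma Ck_lin (V W : normedModType R) (A : set V) k (l : V -> W) :
  linear l -> continuous l -> Ck A k l.
Proof.
move=> ll cl; pose lM := GRing.isLinear.Build _ _ _ _ _ ll.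
pose L : {linear V -> W} := HB.pack l lM.
have dl : forall x, differentiable l x := fun x => @linear_differentiable _ _ _ L x cl.
case: k => [|k] /=; first by move=> x _; apply: cl.
split=> [x _|v]; first exact: dl.
have -> : (fun x => 'D_v l x) = (fun _ => l v).
  by apply/funext => x; rewrite deriveE // (@diff_lin _ _ _ L).
exact: Ck_cst.
Qed.

Lemma Ck_linpost (V W W' : normedModType R) (A : set V) k (l : W -> W') (F : V -> W) :
  open A -> linear l -> continuous l -> Ck A k F -> Ck A k (fun x => l (F x)).
Proof.
move=> oA ll cl; pose lM := GRing.isLinear.Build _ _ _ _ _ ll.
pose L : {linear W -> W'} := HB.pack l lM.
have dl : forall x, differentiable l x := fun x => @linear_differentiable _ _ _ L x cl.
elim: k F => [|k IH] F /=.
- by move=> cF x Ax; apply: continuous_comp; [apply: cF|apply: cl].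
- move=> [dF dDF]; split.
    by move=> x Ax; apply: (@differentiable_comp _ _ _ _ F l); [apply: dF|apply: dl].
  move=> v; apply: (@Ck_ext _ _ _ _ (fun x => l ('D_v F x))) => //; last exact: IH.
  move=> x Ax; have dFx := dF x Ax.
  rewrite (deriveE v (@differentiable_comp _ _ _ _ F l _ dFx (dl _))).
  by rewrite (diff_comp dFx (dl _)) /= (@diff_lin _ _ _ L) // deriveE.
Qed.

Lemma Ck_pair (V W1 W2 : normedModType R) (A : set V) k (g1 : V -> W1) (g2 : V -> W2) :
  open A -> Ck A k g1 -> Ck A k g2 -> Ck A k (fun x => (g1 x, g2 x)).
Proof.
move=> oA; elim: k g1 g2 => [|k IH] g1 g2 /=.
- by move=> c1 c2 x Ax; apply: cvg_pair; [apply: c1|apply: c2].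
- move=> [d1 D1] [d2 D2]; split.
    by move=> x Ax; apply: differentiable_pair; [apply: d1|apply: d2].
  move=> v; apply: (@Ck_ext _ _ _ _ (fun x => ('D_v g1 x, 'D_v g2 x))) => //; last first.
    by apply: IH; [apply: D1|apply: D2].
  move=> x Ax; have dp := differentiable_pair (d1 x Ax) (d2 x Ax).
  by rewrite [RHS](deriveE v dp) (diff_pair (d1 x Ax) (d2 x Ax)) /= (deriveE v (d1 x Ax)) (deriveE v (d2 x Ax)).
Qed.

Definition has_basis (M : normedModType R) := exists (I : finType) (e : I -> M)
  (c : I -> M -> R^o),
  [/\ forall i, linear (c i), forall i, continuous (c i) & forall v, v = \sum_i c i v *: e i].

Lemma Ck_comp (U M W : normedModType R) (A : set U) (B : set M) k (g : U -> M) (f : M -> W) :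
  has_basis M -> open A -> (forall x, A x -> B (g x)) -> Ck B k f -> Ck A k g ->
  Ck A k (f \o g).
Proof.
move=> [I [e [c [cl cc ce]]]] oA gAB.
elim: k f g gAB => [|k IH] f g gAB /=.
- by move=> cf cg x Ax; apply: continuous_comp; [apply: cg| apply: cf; apply: gAB].
- move=> [df dDf] Cg; have [dg dDg] := Cg.
  have dfg : forall x, A x -> differentiable (f \o g) x.
    by move=> x Ax; apply: differentiable_comp; [apply: dg|apply: df; apply: gAB].
  split=> // v.
  apply: (@Ck_ext _ _ _ _ (fun x => \sum_i c i ('D_v g x) *: 'D_(e i) f (g x))) => //.
    move=> x Ax.
    rewrite (deriveE v (dfg x Ax)) (diff_comp (dg x Ax) (df _ (gAB x Ax))) /=.
    rewrite -(deriveE v (dg x Ax)) [in RHS](ce ('D_v g x)) linear_sum.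
    by apply: eq_bigr => i _; rewrite linearZ /= (deriveE (e i) (df _ (gAB x Ax))).
  apply: Ck_sum => // i; apply: Ck_scale => //.
    by apply: Ck_linpost => //; apply: dDg.
  exact: (IH (fun y => 'D_(e i) f y) g gAB (dDf (e i)) (Ck_mono Cg)).
Qed.


Lemma basis_mx a b : has_basis ('M[R]_(a,b)).
Proof.
exists ('I_a * 'I_b)%type, (fun p => delta_mx p.1 p.2),
  (fun p (A : 'M[R]_(a,b)) => (A p.1 p.2 : R^o)).
split.
- by move=> p r u v; rewrite !mxE.
- by move=> p; exact: coord_continuous.
- by move=> A; rewrite {1}(matrix_sum_delta A) pair_big.
Qed.

Lemma basis_prod (M1 M2 : normedModType R) :
  has_basis M1 -> has_basis M2 -> has_basis (M1 * M2)%type.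
Proof.
move=> [I1 [e1 [c1 [l1 k1 s1]]]] [I2 [e2 [c2 [l2 k2 s2]]]].
exists (I1 + I2)%type,
  (fun i => match i with inl i => (e1 i, 0) | inr j => (0, e2 j) end),
  (fun i (p : M1 * M2) => match i with inl i => c1 i p.1 | inr j => c2 j p.2 end).
split.
- by case=> i r u v /=; [exact: l1|exact: l2].
- case=> i p.
    by apply: (@continuous_comp _ _ _ fst); [exact: cvg_fst| exact: k1].
  by apply: (@continuous_comp _ _ _ snd); [exact: cvg_snd| exact: k2].
- case=> v1 v2; rewrite big_sumType /=.
  have h1 : forall s : seq I1, \sum_(i <- s) c1 i v1 *: (e1 i, 0 : M2) =
     (\sum_(i <- s) c1 i v1 *: e1 i, 0).
    elim => [|i s IH]; rewrite ?big_nil ?big_cons ?IH //.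
    by congr (_, _); rewrite /= scaler0 addr0.
  have h2 : forall s : seq I2, \sum_(i <- s) c2 i v2 *: (0 : M1, e2 i) =
     (0, \sum_(i <- s) c2 i v2 *: e2 i).
    elim => [|i s IH]; rewrite ?big_nil ?big_cons ?IH //.
    by congr (_, _); rewrite /= scaler0 addr0.
  rewrite h1 h2 -(s1 v1) -(s2 v2).
  by congr (_, _); rewrite /= ?addr0 ?add0r.
Qed.


Lemma lin_cont (M W : normedModType R) (l : M -> W) : has_basis M -> linear l -> continuous l.
Proof.
move=> [I [e [c [cl cc ce]]]] ll.
pose lM := GRing.isLinear.Build _ _ _ _ _ ll.
pose L : {linear M -> W} := HB.pack l lM.
have el : l = (fun v => \sum_i c i v *: l (e i)).
  apply/funext => v; rewrite {1}(ce v).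
  rewrite [LHS](_ : _ = L (\sum_i c i v *: e i)) // linear_sum.
  by apply: eq_bigr => i _; rewrite linearZ.
have C : Ck setT 0 (fun v => \sum_i c i v *: l (e i)).
  apply: Ck_sum; first exact: openT.
  move=> i; apply: Ck_scale; first exact: openT.
    by move=> x _; apply: cc.
  exact: Ck_cst.
by rewrite el => x; apply: C.
Qed.

Lemma Ck_lin_b (M W : normedModType R) (A : set M) k (l : M -> W) :
  has_basis M -> linear l -> Ck A k l.
Proof. by move=> b ll; apply: Ck_lin => //; apply: lin_cont. Qed.

Lemma open_preim (T S : topologicalType) (A : set T) (B : set S) (h : T -> S) :
  open A -> (forall x, A x -> {for x, continuous h}) -> open B -> open (A `&` h @^-1` B).
Proof.
move=> oA ch oB; rewrite openE => x [Ax Bhx].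
apply: filterI; first exact: open_nbhs_of.
have := ch x Ax _ (@open_nbhs_of _ B (h x) oB Bhx); exact.
Qed.

End CkLib.
Arguments Ck_comp {R U M W A B k g f}.
Arguments Ck_sub {R V W A B k f}.
Arguments Ck_pair {R V W1 W2 A k g1 g2}.
Arguments Ck_lin_b {R M W A k l}.
Arguments Ck_mono {R V W A k f}.

Section Win.
Context {R : realType} {n m : nat}.
Local Notation X := ('rV[R]_n : normedModType R).
Local Notation U := ('rV[R]_m : normedModType R).

Lemma win_const_seq p (y : int -> 'rV[R]_p) c a L :
  (forall k, y k = c) -> win y a L = cwin L c.
Proof. by move=> hy; apply/matrixP => i j; rewrite !mxE hy. Qed.

Lemma win_cst p (c : 'rV[R]_p) a L : win (fun _ => c) a L = cwin L c.
Proof. by apply/matrixP => i j; rewrite !mxE. Qed.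

Lemma rev_cwin p L (c : 'rV[R]_p) : rev_rows (cwin L c) = cwin L c.
Proof. by apply/matrixP => i j; rewrite !mxE. Qed.

Lemma Fz_win (R1 R2 : nat) (Fx : 'M[R]_(R1 + R2, m) -> X) (y yh : int -> U) (k : int) :
  (forall l, y l = yh (- l)) ->
  Fz_of Fx (win yh (k - R2%:Z) (R2 + R1)) = Fx (win y (1 - k - R1%:Z) (R1 + R2)).
Proof.
move=> hy; rewrite /Fz_of; congr Fx; apply/matrixP => i j; rewrite !mxE hy.
congr (yh _ 0 j); have := ltn_ord i; rewrite /=; lia.
Qed.

Lemma Fv_win (G : X * U -> U) (R1 R2 : nat) (Fx : 'M[R]_(R1 + R2, m) -> X)
  (Fu : 'M[R]_((R1 + R2).+1, m) -> U) (y yh : int -> U) (k : int) :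
  (forall l, y l = yh (- l)) ->
  Fv_of G Fx Fu (win yh (k - R2%:Z) (R2 + R1).+1) =
  G (Fx (win y (- k - R1%:Z) (R1 + R2)), Fu (win y (- k - R1%:Z) (R1 + R2).+1)).
Proof.
move=> hy; rewrite /Fv_of; congr (G (Fx _, Fu _)); apply/matrixP => i j; rewrite !mxE hy;
  congr (yh _ 0 j); have := ltn_ord i; rewrite /=; lia.
Qed.

Lemma phi_win Q1 Q2 (phi : 'M[R]_(Q1, m) * X * U * 'M[R]_(Q2, m) -> U)
  (psix : X * U -> X) (psiu : X * U -> U) (z : int -> X) (v : int -> U)
  (x : int -> X) (u : int -> U) (zeta eta : int -> U) k :
  (forall l, zeta l = v (- l)) -> (forall l, u l = eta (- l)) ->
  x (- k) = psix (z k, v k) -> u (- k) = psiu (z k, v k) ->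
  hat_phi psix psiu phi (win eta (k - Q2%:Z) Q2, z k, v k, win v (k + 1) Q1) =
  phi (win zeta (- k - Q1%:Z) Q1, x (- k), u (- k), win u (- k + 1) Q2).
Proof.
move=> hz hu hx hu'; rewrite /hat_phi hx hu'; congr (phi (_, _, _, _));
  apply/matrixP => i j; rewrite !mxE ?hz ?hu; congr (_ _ 0 j).
all: have := ltn_ord i; rewrite /= => ?; apply: f_equal; lia.
Qed.


Arguments Fz_win {R1 R2 Fx y yh k}.
Arguments Fv_win {G R1 R2 Fx Fu y yh k}.

Lemma bX : has_basis X. Proof. exact: basis_mx. Qed.
Lemma bU : has_basis U. Proof. exact: basis_mx. Qed.
Lemma bXU : has_basis (X * U)%type. Proof. exact: basis_prod bX bU. Qed.

Lemma fwd (f psix : X * U -> X) (g psiu : X * U -> U) (x0 : X) (u0 : U)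
  (W W' : set (X * U)%type) :
  open W -> open W' -> W (x0, u0) -> W' (f (x0, u0), g (x0, u0)) ->
  (forall p, W p -> W' (f p, g p) /\ (psix (f p, g p), psiu (f p, g p)) = p) ->
  (forall q, W' q -> W (psix q, psiu q) /\ (f (psix q, psiu q), g (psix q, psiu q)) = q) ->
  smooth_on W g -> smooth_on W' psix -> smooth_on W' psiu -> f (x0, u0) = x0 ->
  forall Q1 Q2 (phi : 'M[R]_(Q1, m) * X * U * 'M[R]_(Q2, m) -> U) R1 R2
    (Fx : 'M[R]_(R1 + R2, m) -> X) (Fu : 'M[R]_((R1 + R2).+1, m) -> U),
  flat_param f g x0 u0 phi Fx Fu ->
  flat_param psix psiu x0 (g (x0, u0)) (hat_phi psix psiu phi) (Fz_of Fx) (Fv_of g Fx Fu).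
Proof.
move=> oW oW' Wp0 W'q0 HW HW' sg spx spu fx0 Q1 Q2 phi R1 R2 Fx Fu.
rewrite /flat_param; cbv zeta.
set v0 := g (x0, u0).
have [px0 pu0] : psix (x0, v0) = x0 /\ psiu (x0, v0) = u0.
  by have [_] := HW _ Wp0; rewrite fx0 => -[-> ->].
set y0 := phi (cwin Q1 v0, x0, u0, cwin Q2 u0).
move=> [[Aphi [oAphi Aphi0 sphi]] [AFx [oAFx AFx0 sFx]] [AFu [oAFu AFu0 sFu]]
  [N [M [[oN Nx0] [oM My0] Hi Hii]]]].
have ey0 : hat_phi psix psiu phi (cwin Q2 (psiu (x0, v0)), x0, v0, cwin Q1 v0) = y0.
  by rewrite /hat_phi px0 pu0 !rev_cwin.
rewrite ey0 pu0.
have [Fx0 Fu0] : Fx (cwin (R1 + R2) y0) = x0 /\ Fu (cwin (R1 + R2).+1 y0) = u0.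
  have := Hi (fun _ => x0) (fun _ => u0) (fun _ => esym fx0) (fun _ => Nx0) 0.
  rewrite /= !(@win_const_seq _ _ y0) => [[<- <-] //|k|k];
  by rewrite !win_cst.
have W'0 : W' (x0, v0) by rewrite -fx0.
have bIn : has_basis ('M[R]_(Q2, m) * X * U * 'M[R]_(Q1, m))%type.
  apply: basis_prod; last exact: basis_mx.
  apply: basis_prod; last exact: bU.
  apply: basis_prod; [exact: basis_mx|exact: bX].
have bOut : has_basis ('M[R]_(Q1, m) * X * U * 'M[R]_(Q2, m))%type.
  apply: basis_prod; last exact: basis_mx.
  apply: basis_prod; last exact: bU.
  apply: basis_prod; [exact: basis_mx|exact: bX].
split.
- pose T4 := (((('M[R]_(Q2, m) : normedModType R) * X)%type : normedModType R) * U *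
      ('M[R]_(Q1, m) : normedModType R))%type : normedModType R.
  pose pi := fun w : T4 => ((w.1.1.2, w.1.2) : (X * U)%type).
  have lpi : linear pi by [].
  pose hm := fun w : T4 =>
     (rev_rows w.2, psix (pi w), psiu (pi w), rev_rows w.1.1.1).
  have ehat : hat_phi psix psiu phi = phi \o hm by apply/funext => -[[[E z] v] V].
  pose D1 : set T4 := setT `&` pi @^-1` W'.
  have oD1 : open D1.
    apply: (@open_preim _ _ setT W' pi); [exact: openT| |exact: oW'].
    move=> x _; apply: (lin_cont _ lpi). exact: bIn.
  have Chm : forall k, Ck D1 k hm.
    move=> k; apply: Ck_pair; [exact: oD1| |]; last first.
      apply: Ck_lin_b; first exact: bIn.
      move=> a u v; apply/matrixP => i j; rewrite !mxE.
      done.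
    apply: Ck_pair; [exact: oD1| |]; last first.
      apply: (@Ck_comp _ _ _ _ D1 W' k pi psiu bXU oD1); [by move=> x []|apply: spu|].
      by apply: Ck_lin_b; [exact: bIn|exact: lpi].
    apply: Ck_pair; [exact: oD1| |]; last first.
      apply: (@Ck_comp _ _ _ _ D1 W' k pi psix bXU oD1); [by move=> x []|apply: spx|].
      by apply: Ck_lin_b; [exact: bIn|exact: lpi].
    apply: Ck_lin_b; first exact: bIn.
    by move=> a u v; apply/matrixP => i j; rewrite !mxE.
  pose D := D1 `&` hm @^-1` Aphi.
  have oD : open D.
    by apply: (@open_preim _ _ D1 Aphi hm oD1 _ oAphi) => x Dx; exact: (Chm 0 x Dx).
  exists D; split => //.
    split; first by split.
    by rewrite /hm /pi /= !rev_cwin px0 pu0.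
  rewrite ehat => k; apply: (@Ck_comp _ _ _ _ D Aphi k hm phi bOut oD).
  + by move=> x [].
  + exact: sphi.
  + by apply: Ck_sub (Chm k) => x [].
- pose P := fun Wm : ('M[R]_(R2 + R1, m) : normedModType R) =>
    (\matrix_(i < R1 + R2, j < m) Wm (rev_ord (cast_ord (addnC R1 R2) i)) j : 'M[R]_(R1 + R2, m)).
  have lP : linear P by move=> a u v; apply/matrixP => i j; rewrite !mxE.
  have eFz : Fz_of Fx = Fx \o P by [].
  pose D : set ('M[R]_(R2 + R1, m) : normedModType R) := setT `&` P @^-1` AFx.
  have oD : open D.
    apply: (@open_preim _ _ setT AFx P); [exact: openT| |exact: oAFx].
    move=> x _; apply: (lin_cont _ lP); exact: basis_mx.
  have PC : P (cwin (R2 + R1) y0) = cwin (R1 + R2) y0 by apply/matrixP => i j; rewrite !mxE.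
  exists D; split => //.
    by split => //; rewrite /preimage /= PC.
  rewrite eFz => k; apply: (@Ck_comp _ _ _ _ D AFx k P Fx (basis_mx _ _) oD).
  + by move=> x [].
  + by apply: sFx.
  + by apply: Ck_lin_b; [exact: basis_mx|exact: lP].
- pose P1 := fun Wm : ('M[R]_((R2 + R1).+1, m) : normedModType R) =>
    (\matrix_(i < R1 + R2, j < m) Wm (cast_ord (congr1 S (addnC R1 R2))
                         (rev_ord (widen_ord (leqnSn _) i))) j : 'M[R]_(R1 + R2, m)).
  pose P2 := fun Wm : ('M[R]_((R2 + R1).+1, m) : normedModType R) =>
    (\matrix_(i < (R1 + R2).+1, j < m) Wm (cast_ord (congr1 S (addnC R1 R2)) (rev_ord i)) j
      : 'M[R]_((R1 + R2).+1, m)).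
  have lP1 : linear P1 by move=> a u v; apply/matrixP => i j; rewrite !mxE.
  have lP2 : linear P2 by move=> a u v; apply/matrixP => i j; rewrite !mxE.
  pose pm := fun Wm => ((Fx (P1 Wm), Fu (P2 Wm)) : (X * U)%type).
  have eFv : Fv_of g Fx Fu = g \o pm by [].
  pose D0 : set ('M[R]_((R2 + R1).+1, m) : normedModType R) :=
    (setT `&` P1 @^-1` AFx) `&` (setT `&` P2 @^-1` AFu).
  have oD0 : open D0.
    apply: openI.
      apply: (@open_preim _ _ setT AFx P1); [exact: openT| |exact: oAFx].
      move=> x _; apply: (lin_cont _ lP1); exact: basis_mx.
    apply: (@open_preim _ _ setT AFu P2); [exact: openT| |exact: oAFu].
    move=> x _; apply: (lin_cont _ lP2); exact: basis_mx.
  have Cpm : forall k, Ck D0 k pm.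
    move=> k; apply: Ck_pair; [exact: oD0| |].
    + apply: (@Ck_comp _ _ _ _ D0 AFx k P1 Fx (basis_mx _ _) oD0).
      * by move=> x [[]].
      * by apply: sFx.
      * by apply: Ck_lin_b; [exact: basis_mx|exact: lP1].
    + apply: (@Ck_comp _ _ _ _ D0 AFu k P2 Fu (basis_mx _ _) oD0).
      * by move=> x [_ []].
      * by apply: sFu.
      * by apply: Ck_lin_b; [exact: basis_mx|exact: lP2].
  pose D := D0 `&` pm @^-1` W.
  have oD : open D.
    by apply: (@open_preim _ _ D0 W pm oD0 _ oW) => x Dx; exact: (Cpm 0 x Dx).
  have P1C : P1 (cwin (R2 + R1).+1 y0) = cwin (R1 + R2) y0.
    by apply/matrixP => i j; rewrite !mxE.
  have P2C : P2 (cwin (R2 + R1).+1 y0) = cwin (R1 + R2).+1 y0.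
    by apply/matrixP => i j; rewrite !mxE.
  exists D; split => //.
    split; first by split; split => //; rewrite /preimage /= ?P1C ?P2C.
    by rewrite /preimage /= /pm P1C P2C Fx0 Fu0.
  rewrite eFv => k; apply: (@Ck_comp _ _ _ _ D W k pm g bXU oD).
  + by move=> x [].
  + by apply: sg.
  + by apply: (Ck_sub _ (Cpm k)) => x [].
pose Nh : set (X * U)%type := W' `&` (fun q => (psix q, psiu q)) @^-1` N.
have oNh : open Nh.
  apply: (@open_preim _ _ W' N (fun q => (psix q, psiu q)) oW' _ oN) => q Wq.
  exact: (Ck_pair oW' (spx 0) (spu 0) q Wq).
have Nh0 : Nh (x0, v0) by split => //; rewrite /preimage /= px0 pu0.
have [d d0 hd] : exists2 d : R, 0 < d & forall (A1 : ('M[R]_(R1 + R2, m) : normedModType R))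
    (A2 : ('M[R]_((R1 + R2).+1, m) : normedModType R)),
   ball (cwin (R1 + R2) y0 : ('M[R]_(R1 + R2, m) : normedModType R)) d A1 ->
   ball (cwin (R1 + R2).+1 y0 : ('M[R]_((R1 + R2).+1, m) : normedModType R)) d A2 ->
   W (Fx A1, Fu A2).
  pose T2 := (('M[R]_(R1 + R2, m) : normedModType R) *
                ('M[R]_((R1 + R2).+1, m) : normedModType R))%type : normedModType R.
  pose c12 : T2 := (cwin (R1 + R2) y0, cwin (R1 + R2).+1 y0).
  have bT2 : has_basis T2 by apply: basis_prod; apply: basis_mx.
  have lfst : linear (fun p : T2 => p.1) by [].
  have lsnd : linear (fun p : T2 => p.2) by [].
  pose Dp : set T2 := (setT `&` (fun p : T2 => p.1) @^-1` AFx) `&`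
                      (setT `&` (fun p : T2 => p.2) @^-1` AFu).
  have oDp : open Dp.
    apply: openI.
      apply: (@open_preim _ _ setT AFx (fun p : T2 => p.1)); [exact: openT| |exact: oAFx].
      by move=> x _; apply: (lin_cont _ lfst).
    apply: (@open_preim _ _ setT AFu (fun p : T2 => p.2)); [exact: openT| |exact: oAFu].
    by move=> x _; apply: (lin_cont _ lsnd).
  have CF : Ck Dp 0 (fun p : T2 => (Fx p.1, Fu p.2)).
    apply: Ck_pair; [exact: oDp| |].
    - apply: (@Ck_comp _ _ _ _ Dp AFx 0 (fun p : T2 => p.1) Fx (basis_mx _ _) oDp).
      + by move=> x [[]].
      + by apply: sFx.
      + by apply: Ck_lin_b.
    - apply: (@Ck_comp _ _ _ _ Dp AFu 0 (fun p : T2 => p.2) Fu (basis_mx _ _) oDp).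
      + by move=> x [_ []].
      + by apply: sFu.
      + by apply: Ck_lin_b.
  have cF := CF c12 (conj (conj I AFx0) (conj I AFu0)).
  have Wn : nbhs (Fx (cwin (R1 + R2) y0), Fu (cwin (R1 + R2).+1 y0)) W.
    by rewrite Fx0 Fu0; exact: open_nbhs_of.
  move: (cF _ Wn) => /nbhs_ballP [d d0 hdd]; exists d => // A1 A2 b1 b2.
  exact: (hdd (A1, A2) (conj b1 b2)).
pose Mh : set U := M `&` ball y0 d.
have winball : forall (y : int -> U) a L, (forall k, ball y0 d (y k)) ->
    ball (cwin L y0 : ('M[R]_(L, m) : normedModType R)) d (win y a L).
  move=> y a L yb; split => // i j; rewrite !mxE.
  by have [_ h] := yb (a + (i : nat)%:Z); exact: h 0 j.
have inW : forall y : int -> U, (forall k, Mh (y k)) -> forall a,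
    W (Fx (win y a (R1 + R2)), Fu (win y a (R1 + R2).+1)).
  by move=> y My a; apply: hd; apply: winball => k; case: (My k).
exists Nh, Mh; split.
- by split.
- split; first exact: openI oM (ball_open _ _).
  by split => //; exact: ballxx.
- move=> z v trz Nz k.
  pose x := fun l : int => z (1 - l).
  pose u := fun l : int => psiu (z (- l), v (- l)).
  have xl : forall l, x l = psix (z (- l), v (- l)).
    by move=> l; rewrite /x -trz addrC.
  have HWl : forall l, f (x l, u l) = z (- l) /\ g (x l, u l) = v (- l).
    move=> l; rewrite xl /u; have [_ e] := HW' _ (Nz (- l)).1.
    by case: e => -> ->.
  have trx : forall l, x (l + 1) = f (x l, u l).
    move=> l; rewrite (HWl l).1 /x; congr z; lia.
  have Nxu : forall l, N (x l, u l) by move=> l; rewrite xl; exact: (Nz (- l)).2.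
  have H := Hi x u trx Nxu.
  have yeq : forall l,
    (fun k => phi (win (fun l => g (x l, u l)) (k - Q1%:Z) Q1, x k, u k, win u (k + 1) Q2)) l =
    (fun k => hat_phi psix psiu phi (win (fun l => psiu (z l, v l)) (k - Q2%:Z) Q2,
                z k, v k, win v (k + 1) Q1)) (- l).
    move=> l; cbv beta.
    rewrite (@phi_win Q1 Q2 phi psix psiu z v x u (fun l => g (x l, u l))
               (fun l => psiu (z l, v l)) (- l)) ?opprK //.
    all: try by move=> j; rewrite (HWl j).2.
    all: try by rewrite xl.
    all: try by rewrite /u opprK.
    all: try by rewrite opprK xl.
    all: try by rewrite /x opprK.
  rewrite (Fz_win yeq) (Fv_win yeq).
  have [h1 _] := H (1 - k).
  have [h2 h3] := H (- k).
  split.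
    by rewrite -h1 /x; congr z; lia.
  by rewrite -h2 -h3 (HWl (- k)).2 opprK.
- move=> yh Myh.
  pose y := fun l : int => yh (- l).
  have Mhy : forall k, Mh (y k) by move=> k; exact: Myh.
  have My : forall k, M (y k) by move=> k; case: (Mhy k).
  have [trx Nxu yphi] := Hii y My.
  pose x := fun k => Fx (win y (k - R1%:Z) (R1 + R2)).
  pose u := fun k => Fu (win y (k - R1%:Z) (R1 + R2).+1).
  have trx' : forall k, x (k + 1) = f (x k, u k) := trx.
  have Nxu' : forall k, N (x k, u k) := Nxu.
  have Wxu : forall k, W (x k, u k) by move=> k; exact: inW y Mhy _.
  have yeq : forall l, y l = yh (- l) by [].
  pose zf := fun k => Fz_of Fx (win yh (k - R2%:Z) (R2 + R1)).
  pose vf := fun k => Fv_of g Fx Fu (win yh (k - R2%:Z) (R2 + R1).+1).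
  have key : forall k, zf k = f (x (- k), u (- k)) /\ vf k = g (x (- k), u (- k)).
    move=> k; split.
      by rewrite /zf (Fz_win yeq) -trx' /x; congr (Fx (win y _ _)); lia.
    by rewrite /vf (Fv_win yeq).
  have HWk : forall l, psix (f (x l, u l), g (x l, u l)) = x l /\
                       psiu (f (x l, u l), g (x l, u l)) = u l.
    by move=> l; have [_ e] := HW _ (Wxu l); case: e => -> ->.
  split.
  + move=> k; rewrite -/(zf (k + 1)) -/(zf k) -/(vf k).
    have [-> ->] := key k; rewrite (HWk (- k)).1 (key (k + 1)).1.
    by rewrite -trx'; congr x; lia.
  + move=> k; rewrite -/(zf k) -/(vf k); have [-> ->] := key k.
    split; first exact: (HW _ (Wxu (- k))).1.
    by rewrite /preimage /= (HWk (- k)).1 (HWk (- k)).2.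
  + move=> k.
    apply: esym; etransitivity.
      apply: (@phi_win Q1 Q2 phi psix psiu zf vf x u (fun l => g (x l, u l))
               (fun l => psiu (zf l, vf l)) k).
      * by move=> j; rewrite (key (- j)).2 opprK.
      * by move=> j; rewrite (key (- j)).1 (key (- j)).2 opprK (HWk j).2.
      * by rewrite (key k).1 (key k).2 (HWk (- k)).1.
      * by rewrite (key k).1 (key k).2 (HWk (- k)).2.
    have e := yphi (- k); rewrite /y opprK in e; rewrite e.
    by [].
Qed.

End Win.
Unset Implicit Arguments.

Theorem theorem3 (R : realType) (n m : nat)
  (f : 'rV[R]_n * 'rV[R]_m -> 'rV[R]_n) (g : 'rV[R]_n * 'rV[R]_m -> 'rV[R]_m)
  (psix : 'rV[R]_n * 'rV[R]_m -> 'rV[R]_n) (psiu : 'rV[R]_n * 'rV[R]_m -> 'rV[R]_m)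
  (x0 : 'rV[R]_n) (u0 : 'rV[R]_m) :
  (* f and g are smooth *)
  smooth_on setT f -> smooth_on setT g ->
  (* rank (d_u f) = m *)
  (forall (x : 'rV[R]_n) (u w : 'rV[R]_m),
      'D_w (fun u' => f (x, u')) u = 0 -> w = 0) ->
  (* submersivity: rank (d_(x,u) f) = n *)
  (forall (p : 'rV[R]_n * 'rV[R]_m) (dx : 'rV[R]_n),
      exists d : 'rV[R]_n * 'rV[R]_m, 'D_d f p = dx) ->
  (* (x0,u0) is an equilibrium *)
  f (x0, u0) = x0 ->
  (* (x,u) |-> (f,g) is a local diffeomorphism around (x0,u0), with
     smooth local inverse (psix, psiu) *)
  (exists (W W' : set ('rV[R]_n * 'rV[R]_m : normedModType R)),
     [/\ open W /\ open W', W (x0, u0) /\ W' (f (x0, u0), g (x0, u0)),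
         forall p, W p -> W' (f p, g p) /\ (psix (f p, g p), psiu (f p, g p)) = p,
         forall q, W' q -> W (psix q, psiu q) /\ (f (psix q, psiu q), g (psix q, psiu q)) = q &
         smooth_on W' psix /\ smooth_on W' psiu]) ->
  [/\
  (* forward direction, with the explicit flat output and parameterization *)
    (forall (Q1 Q2 : nat) (phi : 'M[R]_(Q1, m) * 'rV[R]_n * 'rV[R]_m * 'M[R]_(Q2, m) -> 'rV[R]_m)
            (R1 R2 : nat) (Fx : 'M[R]_(R1 + R2, m) -> 'rV[R]_n)
            (Fu : 'M[R]_((R1 + R2).+1, m) -> 'rV[R]_m),
       flat_param f g x0 u0 phi Fx Fu ->
       flat_param psix psiu x0 (g (x0, u0)) (hat_phi psix psiu phi)
                  (Fz_of Fx) (Fv_of g Fx Fu)),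
  (* converse direction, with the explicit flat output *)
    (forall (Q2 Q1 : nat)
            (hphi : 'M[R]_(Q2, m) * 'rV[R]_n * 'rV[R]_m * 'M[R]_(Q1, m) -> 'rV[R]_m),
       flat_output psix psiu x0 (g (x0, u0)) hphi ->
       flat_output f g x0 u0 (back_phi f g hphi)) &
  (* the associated system is flat iff the original system is flat *)
    (flat psix psiu x0 (g (x0, u0)) <-> flat f g x0 u0)].
Proof.
move=> sf sg _ _ fx0 [W [W' [[oW oW'] [Wp0 W'q0] HW HW' [spx spu]]]].
have sgW : smooth_on W g by move=> k; apply: (Ck_sub _ (sg k)).
have sfW : smooth_on W f by move=> k; apply: (Ck_sub _ (sf k)).
have [px0 pu0] : psix (x0, g (x0, u0)) = x0 /\ psiu (x0, g (x0, u0)) = u0.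
  by have [_] := HW _ Wp0; rewrite fx0 => -[-> ->].
have part1 := fwd oW oW' Wp0 W'q0 HW HW' sgW spx spu fx0.
have W'0 : W' (x0, g (x0, u0)) by rewrite -{1}fx0.
have W0 : W (psix (x0, g (x0, u0)), psiu (x0, g (x0, u0))) by rewrite px0 pu0.
have part2 : forall (Q2 Q1 : nat)
    (hphi : 'M[R]_(Q2, m) * 'rV[R]_n * 'rV[R]_m * 'M[R]_(Q1, m) -> 'rV[R]_m),
    flat_output psix psiu x0 (g (x0, u0)) hphi ->
    flat_output f g x0 u0 (back_phi f g hphi).
  move=> Q2 Q1 hphi [R1 [R2 [Fz [Fv P]]]].
  have := fwd oW' oW W'0 W0 HW' HW spu sfW sgW px0 P.
  rewrite pu0 => H.
  by exists R2, R1, (Fz_of Fz), (Fv_of psiu Fz Fv).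
split => //.
split.
- move=> [Q1 [Q2 [hphi Hfo]]].
  by exists Q2, Q1, (back_phi f g hphi); apply: part2.
- move=> [Q1 [Q2 [phi [R1 [R2 [Fx [Fu P]]]]]]].
  exists Q2, Q1, (hat_phi psix psiu phi), R2, R1, (Fz_of Fx), (Fv_of g Fx Fu).
  exact: part1.
Qed.
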